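(* Let $(P,A,\lambda)$ be a marked poset and let $x\in\mathcal{O}_{P,A}(\lambda)$. Then $x$ is a vertex of the marked order polytope $\mathcal{O}_{P,A}(\lambda)$ if and only if every connected component of the identity diagram $\mathcal{D}^\lambda_{P,A}(x)$ contains an element of $A$.
   Context: A marked poset $(P,A,\lambda)$ consists of a finite poset $P$, a subset $A\subseteq P$ containing all minimal and all maximal elements of $P$, and a vector $\lambda=(\lambda_a)_{a\in A}\in\mathbb{R}^A$ with $\lambda_a\le\lambda_b$ whenever $a\le b$. The marked order polytope is $\mathcal{O}_{P,A}(\lambda)=\{x\in\mathbb{R}^{P\setminus A}: x_p\le x_q \text{ for } p\le q;\ \lambda_a\le x_p \text{ for } a\le p;\ x_p\le\lambda_b \text{ for } p\le b\}$. For $x\in\mathcal{O}_{P,A}(\lambda)$ put $v(p)=x_p$ if $p\notin A$ and $v(p)=\lambda_p$ if $p\in A$. The identity diagram $\mathcal{D}^\lambda_{P,A}(x)$ contains the Hasse diagram of $P$ (an arrow $p\to q$ whenever $q$ covers $p$), and additionally a reverse arrow $q\to p$ whenever $p\to q$ is a Hasse arrow, $p,q$ are not both in $A$, and $v(p)=v(q)$. A set of nodes is connected if any two of its nodes are joined by a (possibly empty) chain of double arrows $p\rightleftarrows p_1\rightleftarrows\cdots\rightleftarrows p_t\rightleftarrows q$ within the set; connected components are the maximal connected subsets. *)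

(* Defs.v *)
From HB Require Import structures.
From mathcomp Require Import all_boot all_order all_algebra.
Set Implicit Arguments. Unset Strict Implicit. Unset Printing Implicit Defensive.
Import Order.TTheory GRing.Theory Num.Theory.
Local Open Scope ring_scope.

Section MarkedPoset.
Variables (d : Order.disp_t) (P : finPOrderType d) (R : realFieldType).

(** Marked poset condition: A contains all minimal and all maximal elements,
    lambda is order preserving on A (values of lambda outside A are unused). *)
Definition marked_poset (A : {set P}) (lambda : P -> R) : Prop :=
  (forall p : P, (forall q : P, (q <= p)%O -> q = p) -> p \in A) /\
  (forall p : P, (forall q : P, (p <= q)%O -> q = p) -> p \in A) /\
  (forall a b : P, a \in A -> b \in A -> (a <= b)%O -> lambda a <= lambda b).

Definition free_elts (A : {set P}) := {p : P | p \notin A}.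

Definition val_of (A : {set P}) (lambda : P -> R)
  (x : {ffun free_elts A -> R}) (p : P) : R :=
  match @insub P (fun q => q \notin A) (free_elts A) p with
  | Some q => x q
  | None => lambda p
  end.

Definition in_MOP (A : {set P}) (lambda : P -> R)
  (x : {ffun free_elts A -> R}) : Prop :=
  forall p q : P, (p <= q)%O -> ~~ ((p \in A) && (q \in A)) ->
    val_of lambda x p <= val_of lambda x q.

Definition is_vertex (A : {set P}) (lambda : P -> R)
  (x : {ffun free_elts A -> R}) : Prop :=
  in_MOP lambda x /\
  forall (y z : {ffun free_elts A -> R}) (t : R),
    in_MOP lambda y -> in_MOP lambda z -> 0 < t -> t < 1 ->
    (forall i, x i = t * y i + (1 - t) * z i) -> y = z.

Definition covers (p q : P) : bool :=
  (p < q)%O && [forall r : P, ~~ ((p < r)%O && (r < q)%O)].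

Definition dbl_arrow (A : {set P}) (lambda : P -> R)
  (x : {ffun free_elts A -> R}) (p q : P) : bool :=
  [&& (covers p q || covers q p), ~~ ((p \in A) && (q \in A)) &
      val_of lambda x p == val_of lambda x q].

Definition diag_connected (A : {set P}) (lambda : P -> R)
  (x : {ffun free_elts A -> R}) (S : {set P}) : Prop :=
  forall p q, p \in S -> q \in S ->
    connect [rel u w | [&& u \in S, w \in S & dbl_arrow lambda x u w]] p q.

Definition diag_component (A : {set P}) (lambda : P -> R)
  (x : {ffun free_elts A -> R}) (C : {set P}) : Prop :=
  C != set0 /\ diag_connected lambda x C /\
  forall C' : {set P}, C \subset C' -> diag_connected lambda x C' -> C' = C.

End MarkedPoset.

(* Main.v *)
Require Import Defs.
From HB Require Import structures.
From mathcomp Require Import all_boot all_order all_algebra.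
From mathcomp Require Import ring lra.
Import Order.TTheory GRing.Theory Num.Theory.
Local Open Scope ring_scope.
Set Implicit Arguments. Unset Strict Implicit.

Section Aux.
Variables (d : Order.disp_t) (P : finPOrderType d) (R : realFieldType).
Variable (A : {set P}) (lambda : P -> R).

Lemma val_of_free (x : {ffun free_elts A -> R}) (i : free_elts A) :
  val_of lambda x (val i) = x i.
Proof. by rewrite /val_of valK. Qed.

Lemma val_of_A (x : {ffun free_elts A -> R}) p : p \in A -> val_of lambda x p = lambda p.
Proof. by move=> pA; rewrite /val_of insubN // negbK. Qed.

Definition shift (x : {ffun free_elts A -> R}) (g : P -> R) : {ffun free_elts A -> R} :=
  [ffun i => x i + g (val i)].

Lemma val_of_shift x g p : (forall a, a \in A -> g a = 0) ->
  val_of lambda (shift x g) p = val_of lambda x p + g p.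
Proof.
move=> gA; rewrite /val_of; case: insubP => [i _ <-|]; first by rewrite ffunE.
by rewrite negbK => pA; rewrite gA // addr0.
Qed.

Lemma val_of_comb (x y z : {ffun free_elts A -> R}) t p :
  (forall i, x i = t * y i + (1 - t) * z i) ->
  val_of lambda x p = t * val_of lambda y p + (1 - t) * val_of lambda z p.
Proof.
move=> H; rewrite /val_of; case: insubP => [i _ _|_]; first exact: H.
by rewrite mulrBl mul1r addrCA subrr addr0.
Qed.

Lemma dbl_sym (x : {ffun free_elts A -> R}) u w :
  dbl_arrow lambda x u w = dbl_arrow lambda x w u.
Proof. by rewrite /dbl_arrow orbC eq_sym [(w \in A) && _]andbC. Qed.

Lemma cover_up (p q : P) : (p < q)%O -> exists2 r, covers p r & (r <= q)%O.
Proof.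
move: {-1}#|_| (leqnn #|[set r | (p < r)%O && (r < q)%O]|) => n.
elim: n q => [|n IH] q Hc pq;
  (case: (boolP [forall r, ~~ ((p < r)%O && (r < q)%O)]) => [H|];
   first by exists q => //; rewrite /covers pq H);
  rewrite negb_forall => /existsP[r]; rewrite negbK => /andP[pr rq].
  have: (0 < #|[set r | (p < r)%O && (r < q)%O]|)%N.
    by apply/card_gt0P; exists r; rewrite inE pr rq.
  by rewrite leqNgt in Hc; rewrite (negbTE Hc).
have Hlt : (#|[set r0 | (p < r0)%O && (r0 < r)%O]| < #|[set r | (p < r)%O && (r < q)%O]|)%N.
  apply: proper_card; apply/properP; split.
    apply/subsetP => r'; rewrite !inE => /andP[-> /lt_trans]; exact.
  by exists r; rewrite !inE ?pr ?rq ?ltxx ?andbF.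
have [r' H1 H2] := IH r (leq_trans Hlt Hc) pr.
by exists r' => //; apply: le_trans H2 (ltW rq).
Qed.

Lemma cover_down (p q : P) : (p < q)%O -> exists2 r, covers r q & (p <= r)%O.
Proof.
move: {-1}#|_| (leqnn #|[set r | (p < r)%O && (r < q)%O]|) => n.
elim: n p => [|n IH] p Hc pq;
  (case: (boolP [forall r, ~~ ((p < r)%O && (r < q)%O)]) => [H|];
   first by exists p => //; rewrite /covers pq H);
  rewrite negb_forall => /existsP[r]; rewrite negbK => /andP[pr rq].
  have: (0 < #|[set r | (p < r)%O && (r < q)%O]|)%N.
    by apply/card_gt0P; exists r; rewrite inE pr rq.
  by rewrite leqNgt in Hc; rewrite (negbTE Hc).
have Hlt : (#|[set r0 | (r < r0)%O && (r0 < q)%O]| < #|[set r | (p < r)%O && (r < q)%O]|)%N.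
  apply: proper_card; apply/properP; split.
    apply/subsetP => r'; rewrite !inE => /andP[H ->]; by rewrite (lt_trans pr H).
  by exists r; rewrite !inE ?pr ?rq ?ltxx.
have [r' H1 H2] := IH r (leq_trans Hlt Hc) rq.
by exists r' => //; apply: le_trans (ltW pr) H2.
Qed.

Lemma up_closed (f : P -> R) (S : {set P}) :
  (forall p q, (p <= q)%O -> f p <= f q) ->
  (forall u w, u \in S -> covers u w -> f u = f w -> w \in S) ->
  forall p q, p \in S -> (p <= q)%O -> f p = f q -> q \in S.
Proof.
move=> fm cl p q; move: {-1}#|_| (leqnn #|[set r | (p < r)%O && (r <= q)%O]|) => n.
elim: n p => [|n IH] p Hc pS pq fpq; (have [<-//|pq'] := eqVneq p q);
  have ltpq : (p < q)%O by rewrite lt_neqAle pq' pq.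
  have: (0 < #|[set r | (p < r)%O && (r <= q)%O]|)%N.
    by apply/card_gt0P; exists q; rewrite inE ltpq lexx.
  by rewrite leqNgt in Hc; rewrite (negbTE Hc).
have [r pr rq] := cover_up ltpq.
have ltpr : (p < r)%O by case/andP: pr.
have fr : f p = f r by apply: le_anti; rewrite (fm _ _ (ltW ltpr)) /= fpq (fm _ _ rq).
have rS := cl _ _ pS pr fr.
apply: (IH r) => //; last by rewrite -fr.
have Hlt : (#|[set r0 | (r < r0)%O && (r0 <= q)%O]| < #|[set r | (p < r)%O && (r <= q)%O]|)%N.
  apply: proper_card; apply/properP; split.
    apply/subsetP => r'; rewrite !inE => /andP[H ->]; by rewrite (lt_trans ltpr H).
  by exists r; rewrite !inE ?ltpr ?rq ?ltxx.
exact: leq_trans Hlt Hc.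
Qed.

Lemma down_closed (f : P -> R) (S : {set P}) :
  (forall p q, (p <= q)%O -> f p <= f q) ->
  (forall u w, u \in S -> covers w u -> f w = f u -> w \in S) ->
  forall p q, q \in S -> (p <= q)%O -> f p = f q -> p \in S.
Proof.
move=> fm cl p q; move: {-1}#|_| (leqnn #|[set r | (p <= r)%O && (r < q)%O]|) => n.
elim: n q => [|n IH] q Hc qS pq fpq; (have [->//|pq'] := eqVneq p q);
  have ltpq : (p < q)%O by rewrite lt_neqAle pq' pq.
  have: (0 < #|[set r | (p <= r)%O && (r < q)%O]|)%N.
    by apply/card_gt0P; exists p; rewrite inE ltpq lexx.
  by rewrite leqNgt in Hc; rewrite (negbTE Hc).
have [r rq pr] := cover_down ltpq.
have ltrq : (r < q)%O by case/andP: rq.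
have fr : f r = f q by apply: le_anti; rewrite (fm _ _ (ltW ltrq)) /= -fpq (fm _ _ pr).
have rS := cl _ _ qS rq fr.
apply: (IH r) => //; last by rewrite fr.
have Hlt : (#|[set r0 | (p <= r0)%O && (r0 < r)%O]| < #|[set r | (p <= r)%O && (r < q)%O]|)%N.
  apply: proper_card; apply/properP; split.
    apply/subsetP => r'; rewrite !inE => /andP[-> H]; by rewrite (lt_trans H ltrq).
  by exists r; rewrite !inE ?ltrq ?pr ?ltxx.
exact: leq_trans Hlt Hc.
Qed.


Lemma exists_lb (T : finType) (Q : pred T) (g : T -> R) :
  (forall t, Q t -> 0 < g t) -> exists2 e, 0 < e & forall t, Q t -> e <= g t.
Proof.
move=> Hg.
suff [e e0 He] : exists2 e, 0 < e & forall t, t \in enum T -> Q t -> e <= g t.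
  by exists e => // t; apply: He; rewrite mem_enum.
elim: (enum T) => [|t s [e e0 He]]; first by exists 1.
case: (boolP (Q t)) => Qt.
  exists (Num.min e (g t)); first by rewrite lt_min e0 Hg.
  move=> t'; rewrite inE => /orP[/eqP-> _|ts Qt']; rewrite ge_min ?lexx ?orbT //.
  by rewrite He.
exists e => // t'; rewrite inE => /orP[/eqP->|ts]; [by rewrite (negbTE Qt)|exact: He].
Qed.

Variable x : {ffun free_elts A -> R}.
Definition E := [rel u w | dbl_arrow lambda x u w].
Definition E' (S : {set P}) := [rel u w | [&& u \in S, w \in S & dbl_arrow lambda x u w]].

Lemma E_sym : connect_sym E.
Proof. by apply: sym_connect_sym => u w; rewrite /E /= dbl_sym. Qed.

Lemma connect_inv (f : P -> R) :
  (forall u w, dbl_arrow lambda x u w -> f u = f w) ->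
  forall p q, connect E p q -> f p = f q.
Proof.
move=> fE p q /connectP[s]; elim: s p => [|w s IH] p /=; first by move=> _ ->.
move=> /andP[Epw pth] Hl; rewrite (fE _ _ Epw); exact: IH pth Hl.
Qed.

Lemma comp_component p : diag_component lambda x [set q | connect E p q].
Proof.
set K := [set q | connect E p q].
have inK : forall q1 q2, q1 \in K -> connect E q1 q2 -> connect (E' K) q1 q2.
  move=> q1 q2 q1K /connectP[s]; elim: s q1 q1K => [|w s IH] q1 q1K /=.
    by move=> _ ->; apply: connect0.
  move=> /andP[Eqw pth] Hl.
  have wK : w \in K by rewrite inE (connect_trans _ (connect1 Eqw)) // -inE.
  apply: (connect_trans (connect1 _)) (IH w wK pth Hl).
  by rewrite /E' /= q1K wK.
split; [apply/set0Pn; exists p; rewrite inE connect0 //|split].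
  move=> q1 q2; rewrite !inE => H1 H2; apply: inK; first by rewrite inE.
  by apply: connect_trans H2; rewrite E_sym.
move=> C' KC' HC'; apply/setP => q; apply/idP/idP => [qC|]; last exact: (subsetP KC').
have pC : p \in C' by apply: (subsetP KC'); rewrite inE connect0.
rewrite inE; apply: connect_sub (HC' p q pC qC) => u w /andP[_ /andP[_ H]].
exact: connect1.
Qed.

End Aux.

Unset Implicit Arguments.

Theorem theorem2 (d : Order.disp_t) (P : finPOrderType d) (R : realFieldType)
  (A : {set P}) (lambda : P -> R) (x : {ffun free_elts A -> R}) :
  marked_poset A lambda ->
  in_MOP lambda x ->
  (is_vertex lambda x <->
   forall C : {set P}, diag_component lambda x C -> exists2 a, a \in A & a \in C).
Proof.
move=> [_ [_ Hl]] Hx.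
set f := val_of lambda x.
have fm : forall p q, (p <= q)%O -> f p <= f q.
  move=> p q pq; case: (boolP ((p \in A) && (q \in A))) => [/andP[pA qA]|nA].
    by rewrite /f !val_of_A //; apply: Hl.
  exact: Hx.
split.
- move=> [_ Hv] C [C0 [Ccon Cmax]].
  case: (boolP [exists a, (a \in A) && (a \in C)]) => [/existsP[a /andP[aA aC]]|Hn].
    by exists a.
  exfalso.
  have CA : forall p, p \in C -> p \notin A.
    move=> p pC; apply/negP => pA; move/negP: Hn; apply; apply/existsP; exists p.
    by rewrite pA.
  have cl : forall u w, u \in C -> dbl_arrow lambda x u w -> w \in C.
    move=> u w uC duw.
    have HC' : diag_connected lambda x (w |: C).
      have sub : forall p q, p \in C -> q \in C ->
          connect [rel a b | [&& a \in w |: C, b \in w |: C & dbl_arrow lambda x a b]] p q.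
        move=> p q pC qC; apply: connect_sub (Ccon p q pC qC) => a b /and3P[aC bC ab].
        by apply: connect1; rewrite /= !inE aC bC ab !orbT.
      have uw : connect [rel a b | [&& a \in w |: C, b \in w |: C & dbl_arrow lambda x a b]] u w.
        by apply: connect1; rewrite /= !inE uC eqxx duw !orbT.
      have wu : connect [rel a b | [&& a \in w |: C, b \in w |: C & dbl_arrow lambda x a b]] w u.
        by apply: connect1; rewrite /= !inE uC eqxx dbl_sym duw !orbT.
      move=> p q; rewrite !inE => /orP[/eqP->|pC] /orP[/eqP->|qC].
      + exact: connect0.
      + exact: connect_trans wu (sub _ _ uC qC).
      + exact: connect_trans (sub _ _ pC uC) uw.
      + exact: sub.
    have := Cmax _ (subsetUr _ _) HC'.
    by move/setP/(_ w); rewrite !inE eqxx /= => <-.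
  have clu := up_closed fm (fun u w uC cuw fuw => cl u w uC
     (introT and3P (And3 (introT orP (or_introl cuw)) (introT negP (fun H => negP (CA u uC) (proj1 (andP H)))) (introT eqP fuw)))).
  have cld := down_closed fm (fun u w uC cwu fwu => cl u w uC
     (introT and3P (And3 (introT orP (or_intror cwu)) (introT negP (fun H => negP (CA u uC) (proj1 (andP H)))) (introT eqP (esym fwu))))).
  have [e e0 He] := @exists_lb _ (P * P)%type (fun pq => (pq.1 <= pq.2)%O && (f pq.1 < f pq.2))
      (fun pq => f pq.2 - f pq.1) (fun pq H => ltac:(case/andP: H => _ H; by rewrite subr_gt0)).
  pose g := fun c (p : P) => c * (p \in C)%:R :> R.
  have gA : forall c a, a \in A -> g c a = 0.
    move=> c a aA; rewrite /g; case: (boolP (a \in C)) => aC; last by rewrite mulr0.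
    by move: (CA a aC); rewrite aA.
  have Hin : forall c, -e <= c -> c <= e -> in_MOP lambda (shift x (g c)).
    move=> c c1 c2 p q pq nA; rewrite (@val_of_shift _ _ _ _ _ x (g c) p (gA c)) (@val_of_shift _ _ _ _ _ x (g c) q (gA c)).
    have := Hx p q pq nA; rewrite -/f => fpq.
    rewrite /g; case: (boolP (p \in C)) => pC; case: (boolP (q \in C)) => qC;
      rewrite /= ?mulr1 ?mulr0 ?addr0.
    + lra.
    + move: fpq; rewrite le_eqVlt => /orP[/eqP fe|flt].
        by move: (clu p q pC pq fe); rewrite (negbTE qC).
      have := He (p, q); rewrite /= pq flt => /(_ isT); lra.
    + move: fpq; rewrite le_eqVlt => /orP[/eqP fe|flt].
        by move: (cld p q qC pq fe); rewrite (negbTE pC).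
      have := He (p, q); rewrite /= pq flt => /(_ isT); lra.
    + exact: fpq.
  have e1 : - e <= e by lra.
  have e2 : - e <= - e by lra.
  have e3 : - e <= e by lra.
  have := Hv (shift x (g e)) (shift x (g (- e))) (1/2) (Hin e e1 (lexx e)) (Hin (- e) (lexx _) e3).
  have h0 : 0 < 1 / 2 :> R by lra.
  have h1 : 1 / 2 < 1 :> R by lra.
  move=> /(_ h0 h1).
  have hc : forall i, x i = 1 / 2 * shift x (g e) i + (1 - 1 / 2) * shift x (g (- e)) i.
    move=> i; rewrite !ffunE /g mulNr; set u := e * _; field; rewrite ?pnatr_eq0 //.
  move=> /(_ hc).
  have [c cC] := set0Pn _ C0.
  move/(congr1 (fun h : {ffun free_elts A -> R} => h (exist _ c (CA c cC)))); rewrite !ffunE /g /= cC /=.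
  lra.
- move=> Hc; split => // y z t Hy Hz t0 t1 Hxyz.
  have edge : forall u w, dbl_arrow lambda x u w ->
      val_of lambda y u = val_of lambda y w /\ val_of lambda z u = val_of lambda z w.
    have WL : forall u w, covers u w -> ~~ ((u \in A) && (w \in A)) -> f u = f w ->
        val_of lambda y u = val_of lambda y w /\ val_of lambda z u = val_of lambda z w.
      move=> u w cuw nA e.
      have uw : (u <= w)%O by case/andP: cuw => /ltW.
      have := Hy u w uw nA; have := Hz u w uw nA.
      move: e; rewrite /f (val_of_comb lambda u Hxyz) (val_of_comb lambda w Hxyz).
      move: (val_of lambda y u) (val_of lambda y w) (val_of lambda z u) (val_of lambda z w) => a b c k.
      move=> H1 H2 H3; split; nra.
    move=> u w /and3P[/orP[cuw|cwu] nA /eqP e]; first exact: WL.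
    have [h1 h2] := WL w u cwu (ltac:(by rewrite andbC)) (esym e); by split.
  have key : forall p, val_of lambda y p = f p /\ val_of lambda z p = f p.
    move=> p; have [a aA aK] := Hc _ (comp_component lambda x p); rewrite inE in aK.
    have k1 := connect_inv (fun u w H => proj1 (edge u w H)) aK.
    have k2 := connect_inv (fun u w H => proj2 (edge u w H)) aK.
    have k3 := @connect_inv _ _ _ _ _ x f (fun u w H => ltac:(case/and3P: H => _ _ /eqP; exact)) _ _ aK.
    by rewrite k1 k2 k3 /f !val_of_A.
  apply/ffunP => i; have [k1 k2] := key (val i); rewrite !val_of_free in k1 k2.
  by rewrite k1 k2.
Qed.
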